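(* Let $\ell,\tilde\ell\in\mathcal{D}^-[0,\infty)$ and $r,\tilde r\in\mathcal{D}^+[0,\infty)$ with $\tilde\ell=\ell$, $r\le\tilde r$ and $\inf_{t\ge0}(r(t)-\ell(t))>0$. Given $\psi\in\mathcal{D}[0,\infty)$, let $(\eta_\ell,\eta_r)$ and $(\eta_{\tilde\ell},\eta_{\tilde r})$ be the constraining processes associated with the SP for $\psi$ on $[\ell(\cdot),r(\cdot)]$ and on $[\tilde\ell(\cdot),\tilde r(\cdot)]$, respectively. Then for every $t\ge0$, $\eta_r(t)\ge\eta_{\tilde r}(t)$ and $\eta_\ell(t)\ge\eta_{\tilde\ell}(t)$.
   Context: $\mathcal{D}[0,\infty)$ denotes the càdlàg functions $[0,\infty)\to(-\infty,\infty)$; $\mathcal{D}^-[0,\infty)$ (resp. $\mathcal{D}^+[0,\infty)$) denotes càdlàg functions with values in $[-\infty,\infty)$ (resp. $(-\infty,\infty]$). SP: $(\phi,\eta)\in\mathcal{D}[0,\infty)^2$ solves the SP on $[\ell(\cdot),r(\cdot)]$ for $\psi$ if (1) $\phi(t)=\psi(t)+\eta(t)\in[\ell(t),r(t)]$ for all $t\ge0$; (2) $\eta=\eta_\ell-\eta_r$ with $\eta_\ell,\eta_r$ non-decreasing and $\int_0^\infty \mathbb{I}_{\{\phi(s)>\ell(s)\}}\,d\eta_\ell(s)=0$, $\int_0^\infty \mathbb{I}_{\{\phi(s)<r(s)\}}\,d\eta_r(s)=0$. The pair $(\eta_\ell,\eta_r)$ is called the pair of constraining processes associated with the SP. When $\inf_t(r(t)-\ell(t))>0$,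 the SP has a unique solution for every $\psi\in\mathcal{D}[0,\infty)$. *)

(* Defs.v *)
From HB Require Import structures.
From mathcomp Require Import all_boot all_order all_algebra.
From mathcomp Require Import all_classical all_reals all_analysis.
Set Implicit Arguments. Unset Strict Implicit. Unset Printing Implicit Defensive.
Import Order.TTheory GRing.Theory Num.Theory.
Import numFieldNormedType.Exports.
Local Open Scope classical_set_scope.
Local Open Scope ring_scope.

Section Defs.
Variable R : realType.

(* Càdlàg on [0,oo): right-continuous at every t >= 0, left limit at every t > 0.
   Functions are given on all of R; only their values on [0,oo) matter. *)
Definition cadlag (f : R -> R) : Prop :=
  forall t : R, 0 <= t ->
    f @ at_right t --> f t /\ (0 < t -> cvg (f @ at_left t)).

Definition cadlag_ext (f : R -> \bar R) : Prop :=
  forall t : R, 0 <= t ->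
    f @ at_right t --> f t /\ (0 < t -> cvg (f @ at_left t)).

Definition Dminus (f : R -> \bar R) : Prop :=
  cadlag_ext f /\ forall t, 0 <= t -> f t != +oo%E.
Definition Dplus (f : R -> \bar R) : Prop :=
  cadlag_ext f /\ forall t, 0 <= t -> f t != -oo%E.

(* Extension of a function on [0,oo) by 0 on (-oo,0): convention eta(0-) = 0,
   so that the Stieltjes measure d eta on [0,oo) has an atom eta(0) at 0. *)
Definition ext0 (f : R -> R) : R -> R := fun s => if s < 0 then 0 else f s.

Definition LS (F : R -> R) (nd : nondecreasing F) (rc : right_continuous F) :=
  @lebesgue_stieltjes_measure R (HB.pack F (isCumulative.Build R _ R F nd rc)).

(* (phi, eta) solves the SP on [l(.), r(.)] for psi, with (etal, etar) the
   associated pair of constraining processes.  eta = phi - psi is determined by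
   phi and psi; the complementarity conditions are the Lebesgue-Stieltjes
   integrals over [0,oo) w.r.t. d etal and d etar (with etal(0-)=etar(0-)=0). *)
Definition SP (l r : R -> \bar R) (psi phi eta etal etar : R -> R) : Prop :=
  [/\ cadlag phi /\ cadlag eta,
      (forall t, 0 <= t -> phi t = psi t + eta t),
      (forall t, 0 <= t -> (l t <= (phi t)%:E <= r t)%E),
      (forall t, 0 <= t -> eta t = etal t - etar t) &
      (exists (ndl : nondecreasing (ext0 etal)) (rcl : right_continuous (ext0 etal))
             (ndr : nondecreasing (ext0 etar)) (rcr : right_continuous (ext0 etar)),
        (\int[LS ndl rcl]_(s in [set x : R | (0 <= x)%R]) (\1_[set s | (l s < (phi s)%:E)%E] s)%:E = 0)%E
        /\ (\int[LS ndr rcr]_(s in [set x : R | (0 <= x)%R]) (\1_[set s | ((phi s)%:E < r s)%E] s)%:E = 0)%E)].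

End Defs.

(* Main.v *)
Require Import Defs.
From HB Require Import structures.
From mathcomp Require Import all_boot all_order all_algebra.
From mathcomp Require Import all_classical all_reals all_analysis.
From mathcomp Require Import ring lra.
Import Order.TTheory GRing.Theory Num.Theory.
Import numFieldNormedType.Exports.
Local Open Scope classical_set_scope.
Local Open Scope ring_scope.
Import HBNNSimple.

Lemma M3 d (T : measurableType d) (R : realType) (mu : {measure set T -> \bar R})
  (D P S : set T) : measurable S -> S `<=` D -> S `<=` P ->
  (\int[mu]_(x in D) (\1_P x)%:E = 0)%E -> mu S = 0%E.
Proof.
move=> mS SD SP H.
apply/eqP; rewrite eq_le measure_ge0 andbT -H.
rewrite ge0_integralE; last by move=> x _; rewrite lee_fin.
apply: ereal_sup_ubound => /=.
exists (indic_nnsfun R mS); last by rewrite sintegral_indic.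
move=> x /=; rewrite /patch /= measurable_realfun.mindicE.
case: (boolP (x \in S)) => xS.
  have := xS; rewrite inE => /[dup] /SD Dx /SP Px.
  have -> : x \in D by rewrite inE.
  by rewrite indicE (_ : x \in P) ?inE.
case: ifP => _; last by rewrite lee_fin.
by rewrite lee_fin indicE; case: (_ \in _).
Qed.
Lemma M1 (R : realType) (F : R -> R) (nd : nondecreasing F) (rc : right_continuous F)
  (a b : R) : a <= b -> LS nd rc `]a, b] = (F b - F a)%:E.
Proof.
move=> ab.
rewrite /LS /lebesgue_stieltjes_measure /measure_extension/=.
rewrite (@measurable_mu_extE _ _ _ (wlength (HB.pack_for (cumulative R R) F (isCumulative.Build R _ R F nd rc)))) /=; last exact: is_ocitv.
by rewrite wlength_itv_bnd.
Qed.

Lemma M2 (R : realType) (F : R -> R) (nd : nondecreasing F) (rc : right_continuous F)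
  (v : R) : LS nd rc [set v] = 0%E ->
  forall e, 0 < e -> exists w, w < v /\ F v - F w < e.
Proof.
move=> H0 e e0.
have [//|NH] := pselect (exists w, w < v /\ F v - F w < e).
exfalso.
have ge w : w < v -> e <= F v - F w.
  move=> wv; rewrite leNgt; apply/negP => lt; apply: NH; by exists w.
pose E := fun i : nat => `]v - i.+1%:R^-1, v]%classic.
have mE i : measurable (E i) by exact: measurable_itv.
have cv : (LS nd rc \o E) @ \oo --> LS nd rc (\bigcap_n E n).
  apply: nonincreasing_cvg_mu => //.
  - have h1 : (0:R) <= 1^-1 by rewrite invr_ge0.
    have := @M1 _ _ nd rc (v - 1^-1) v; rewrite /LS /E /= => ->; rewrite ?ltry//.
    by rewrite lerBlDr lerDl.
  - rewrite -set1_bigcap_oc; exact: measurable_set1.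
  - move=> m n mn; apply/subsetPset/subset_itv => //.
    rewrite leBSide /= lerD2l lerN2 lef_pV2 ?posrE ?ltr0n // ler_nat //.
rewrite -set1_bigcap_oc H0 in cv.
have : (e%:E <= 0)%E.
  apply: (cvge_to_ge cv); apply: nearW => n /=.
  have := @M1 _ _ nd rc (v - n.+1%:R^-1) v; rewrite /LS /E /= => ->; last by rewrite lerBlDr lerDl invr_ge0 ler0n.
  rewrite lee_fin.
  apply: ge; rewrite ltrBlDr ltrDl invr_gt0 ltr0n //.
by rewrite lee_fin leNgt e0.
Qed.
Arguments M3 {d T R mu D P S}.
Arguments M2 {R F nd rc v}.
Arguments M1 {R F} nd rc {a b}.

Lemma ext0_ge (R : realType) (X : R -> R) (x : R) : 0 <= x -> ext0 X x = X x.
Proof. by rewrite /ext0 ltNge => ->. Qed.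

Lemma ext0_lt (R : realType) (X : R -> R) (x : R) : x < 0 -> ext0 X x = 0.
Proof. by rewrite /ext0 => ->. Qed.
Arguments ext0_ge {R} X {x}.
Arguments ext0_lt {R} X {x}.

Lemma nd_ext0 (R : realType) (X : R -> R) (nd : nondecreasing (ext0 X)) (a b : R) :
  0 <= a -> a <= b -> X a <= X b.
Proof.
move=> a0 ab; rewrite -(ext0_ge X a0) -(ext0_ge X (le_trans a0 ab)); exact: nd.
Qed.

Lemma ge0_ext0 (R : realType) (X : R -> R) (nd : nondecreasing (ext0 X)) (a : R) :
  0 <= a -> 0 <= X a.
Proof.
move=> a0; rewrite -(ext0_ge X a0) -(ext0_lt X (ltrN10 R)); apply: nd.
exact: le_trans (lerN10 R) a0.
Qed.

Arguments nd_ext0 {R X} nd {a b}.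
Arguments ge0_ext0 {R X} nd {a}.

Lemma descent (R : realType) (X Y : R -> R) (P : set R)
  (ndX : nondecreasing (ext0 X)) (rcX : right_continuous (ext0 X))
  (ndY : nondecreasing (ext0 Y))
  (HX : (\int[LS ndX rcX]_(s in [set x : R | (0 <= x)%R]) (\1_P s)%:E = 0)%E)
  (u : R) : 0 <= u -> Y u - X u < 0 -> P u ->
  exists y, [/\ 0 <= y, y < u, Y y - X y < 0 & ~ P y].
Proof.
move=> u0 Yu Pu.
pose S := [set w : R | 0 <= w <= u /\ X w = X u].
have Su : S u by split => //; rewrite u0 lexx.
have S0 : S !=set0 by exists u.
have lbS : has_lbound S by exists 0 => w [/andP[]].
pose v := inf S.
have v0 : 0 <= v by apply: lb_le_inf => // w [/andP[]].
have vu : v <= u by apply: ge_inf.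
have Xw w : v < w -> w <= u -> X w = X u.
  move=> vw wu; have [s Ss sw] := inf_lt S0 vw.
  case: Ss => /andP[s0 su] Xs; apply/eqP; rewrite eq_le.
  rewrite (nd_ext0 ndX _ wu) ?(le_trans v0 (ltW vw)) //=.
  by rewrite -Xs (nd_ext0 ndX s0 (ltW sw)).
have Xv : X v = X u.
  have [vu'|] := ltP v u; last by move=> uv; have -> : v = u by apply/eqP; rewrite eq_le vu.
  have h1 : ext0 X @ at_right v --> X u.
    apply: cvg_near_cst; near=> w.
    rewrite ext0_ge; last by apply: le_trans v0 _; apply/ltW; near: w; exact: nbhs_right_gt.
    apply: Xw; first by near: w; exact: nbhs_right_gt.
    by apply/ltW; near: w; exact: nbhs_right_lt.
  rewrite -(ext0_ge X v0); exact: (cvg_unique _ (rcX v) h1).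
have Yv : Y v - X v < 0.
  by rewrite Xv; apply: le_lt_trans Yu; rewrite lerD2r (nd_ext0 ndY v0 vu).
have [Pv|nPv] := pselect (P v); last first.
  exists v; split => //; rewrite lt_neqAle vu andbT; apply/eqP => vu'.
  by apply: nPv; rewrite vu'.
have mu1 : LS ndX rcX [set v] = 0%E.
  apply: (M3 _ _ _ HX); [exact: measurable_set1| by move=> x -> | by move=> x ->].
pose e := - (Y v - X v) / 2.
have e0 : 0 < e by rewrite divr_gt0 // oppr_gt0.
have [w [wv Xvw]] := M2 mu1 e e0.
have [v0'|vpos] := eqVneq v 0.
  exfalso.
  have w0 : w < 0 by rewrite -v0'.
  rewrite (ext0_lt X w0) subr0 (ext0_ge X v0) /e in Xvw.
  have := ge0_ext0 ndY v0.
  move: Xvw Yv; set a := Y v; set b := X v; move=> h1 h2 h3.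
  clear -h1 h2 h3; lra.
have vp : 0 < v by rewrite lt_neqAle eq_sym vpos v0.
pose w' := Num.max w (v / 2).
have w'p : 0 < w' by rewrite lt_max divr_gt0 ?orbT.
have w'v : w' < v by rewrite gt_max wv /= ltr_pdivrMr // ltr_pMr // ltr1n.
have ww' : w <= w' by rewrite le_max lexx.
have Xvw' : X v - X w' < e.
  apply: le_lt_trans Xvw; rewrite -(ext0_ge X v0) -(ext0_ge X (ltW w'p)).
  by rewrite lerD2l lerN2; exact: (ndX _ _ ww').
have Xw'v : X w' < X v.
  rewrite lt_neqAle (nd_ext0 ndX (ltW w'p) (ltW w'v)) andbT Xv.
  apply/eqP => Xe.
  have : v <= w' by apply: ge_inf => //; split => //; rewrite (ltW w'p) /= (ltW (lt_le_trans w'v vu)).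
  by rewrite leNgt w'v.
have : ~ (`]w', v] `<=` P).
  move=> sub.
  have h0 : `]w', v] `<=` [set x : R | 0 <= x].
    move=> x /=; rewrite in_itv /= => /andP[w'x _]; exact: ltW (lt_trans w'p w'x).
  have := M3 (mu := LS ndX rcX) (measurable_itv `]w', v]) h0 sub HX.
  move=> H; have := etrans (esym (M1 ndX rcX (ltW w'v))) H.
  rewrite !ext0_ge //; try exact: ltW.
  move=> /eqP; rewrite eqe subr_eq0 => /eqP Xe.
  by move: Xw'v; rewrite Xe ltxx.
move=> /existsNP [y /not_implyP [yin nPy]].
move: yin; rewrite /= in_itv /= => /andP[w'y yv].
exists y; split.
- exact: ltW (lt_trans w'p w'y).
- rewrite lt_neqAle (le_trans yv vu) andbT; apply/eqP => yu; apply: nPy; by rewrite yu.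
- have Yy : Y y <= Y v by apply: (nd_ext0 ndY (ltW (lt_trans w'p w'y)) yv).
  have Xy : X w' <= X y by apply: (nd_ext0 ndX (ltW w'p) (ltW w'y)).
  move: Xvw' Yv Yy Xy; rewrite /e; set a := Y v; set b := X v; move=> h1 h2 h3 h4.
  clear -h1 h2 h3 h4; lra.
- exact: nPy.
Unshelve. all: by end_near. Qed.

Lemma emid1 (R : realType) (a : \bar R) (b : R) : (a < b%:E)%E ->
  exists m : R, (a < m%:E)%E /\ m < b.
Proof.
case: a => [a||] //= h.
- exists ((a + b) / 2); rewrite lte_fin; rewrite lte_fin in h; split; lra.
- exists (b - 1); split; [exact: ltNyr | lra].
Qed.

Lemma emid2 (R : realType) (a : R) (b : \bar R) : (a%:E < b)%E ->
  exists m : R, a < m /\ (m%:E < b)%E.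
Proof.
case: b => [b||] //= h.
- exists ((a + b) / 2); rewrite lte_fin; rewrite lte_fin in h; split; lra.
- exists (a + 1); split; [lra | exact: ltry].
Qed.

Lemma elt_sub (R : realType) (x y : \bar R) : (0 < y - x)%E -> x != +oo%E -> y != -oo%E -> (x < y)%E.
Proof.
case: x => [x||]; case: y => [y||] //=.
- by rewrite -EFinB !lte_fin subr_gt0.
- by move=> _ _ _; exact: ltry.
- by move=> _ _ _; exact: ltNyr.
Qed.

Lemma EV1 (R : realType) (f : R -> \bar R) (g : R -> R) (t : R) :
  f @ at_right t --> f t -> g @ at_right t --> g t -> (f t < (g t)%:E)%E ->
  \forall u \near at_right t, (f u < (g u)%:E)%E.
Proof.
move=> cf cg h; have [m [fm mg]] := emid1 _ _ _ h.
near=> u; apply: (@lt_trans _ _ m%:E).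
  by near: u; exact: (cf _ (open_ereal_lt' fm)).
by rewrite lte_fin; near: u; exact: cvgr_gt cg _ mg.
Unshelve. all: by end_near. Qed.

Lemma EV2 (R : realType) (f : R -> \bar R) (g : R -> R) (t : R) :
  f @ at_right t --> f t -> g @ at_right t --> g t -> ((g t)%:E < f t)%E ->
  \forall u \near at_right t, ((g u)%:E < f u)%E.
Proof.
move=> cf cg h; have [m [fm mg]] := emid2 _ _ _ h.
near=> u; apply: (@lt_trans _ _ m%:E).
  by rewrite lte_fin; near: u; exact: cvgr_lt cg _ fm.
by near: u; exact: (cf _ (open_ereal_gt' mg)).
Unshelve. all: by end_near. Qed.

Theorem lemma3p1 (R : realType) (l lt : R -> \bar R) (r rt : R -> \bar R)
  (psi : R -> R)
  (phi eta etal etar phit etat etalt etart : R -> R) :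
  Dminus l -> Dminus lt -> Dplus r -> Dplus rt ->
  (forall t, 0 <= t -> lt t = l t) ->
  (forall t, 0 <= t -> (r t <= rt t)%E) ->
  (0 < ereal_inf [set (r t - l t)%E | t in [set t : R | (0 <= t)%R]])%E ->
  cadlag psi ->
  SP l r psi phi eta etal etar ->
  SP lt rt psi phit etat etalt etart ->
  forall t, 0 <= t -> etart t <= etar t /\ etalt t <= etal t.
Proof.
move=> [cl lnoo] _ [_ rnNoo] [crt _] ltl rrt hinf _ SP1 SP2 t t0.
case: SP1 => _ Hphi Hb Heta [ndl [rcl [ndr [rcr _]]]].
case: SP2 => [[cphit _]] Hphit Hbt Hetat [ndlt [rclt [ndrt [rcrt [Il Ir]]]]].
pose A x := etar x - etart x.
pose B x := etal x - etalt x.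
have DAB x : 0 <= x -> phit x - phi x = A x - B x.
  by move=> x0; rewrite Hphit // Hphi // Hetat // Heta // /A /B; ring.
have sep x : 0 <= x -> (l x < rt x)%E.
  move=> x0; apply: (lt_le_trans _ (rrt x x0)).
  have h : (0 < r x - l x)%E.
    apply: (lt_le_trans hinf); apply: ereal_inf_lbound; by exists x.
  exact: elt_sub h (lnoo x x0) (rnNoo x x0).
have FL x : 0 <= x -> ((phit x)%:E <= l x)%E -> A x <= B x.
  move=> x0 h; have /andP[h1 _] := Hb x x0.
  have : phit x <= phi x by rewrite -lee_fin (le_trans h h1).
  by rewrite -subr_le0 DAB // subr_le0.
have FR x : 0 <= x -> (rt x <= (phit x)%:E)%E -> B x <= A x.
  move=> x0 h; have /andP[_ h1] := Hb x x0.
  have : phi x <= phit x by rewrite -lee_fin (le_trans h1 (le_trans (rrt x x0) h)).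
  by rewrite -subr_ge0 DAB // subr_ge0.
have DLA := @descent _ _ _ [set s | ((phit s)%:E < rt s)%E] ndrt rcrt ndr Ir.
have DLB := @descent _ _ _ [set s | (lt s < (phit s)%:E)%E] ndlt rclt ndl Il.
pose Gl := [set x | [/\ 0 <= x, A x < 0, B x < 0 & ((phit x)%:E <= l x)%E]].
pose Gr := [set x | [/\ 0 <= x, A x < 0, B x < 0 & (rt x <= (phit x)%:E)%E]].
have fromA u : 0 <= u -> A u < 0 -> ((phit u)%:E < rt u)%E -> exists y, Gr y /\ y < u.
  move=> u0 Au Pu; have [y [y0 yu Ay nPy]] := DLA u u0 Au Pu.
  have ry : (rt y <= (phit y)%:E)%E by rewrite leNgt; apply/negP.
  exists y; split => //; split => //; exact: le_lt_trans (FR y y0 ry) Ay.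
have fromB u : 0 <= u -> B u < 0 -> (lt u < (phit u)%:E)%E -> exists x, Gl x /\ x < u.
  move=> u0 Bu Pu; have [x [x0 xu Bx nPx]] := DLB u u0 Bu Pu.
  have lx : ((phit x)%:E <= l x)%E by rewrite -ltl // leNgt; apply/negP.
  exists x; split => //; split => //; exact: le_lt_trans (FL x x0 lx) Bx.
have stepl x : Gl x -> exists y, Gr y /\ y < x.
  case=> x0 Ax Bx hx; apply: fromA => //; exact: le_lt_trans hx (sep x x0).
have stepr y : Gr y -> exists x, Gl x /\ x < y.
  case=> y0 Ay By hy; apply: fromB => //; rewrite ltl //; exact: lt_le_trans (sep y y0) hy.
have [ok|nok] := pselect (0 <= A t /\ 0 <= B t).
  by case: ok; rewrite !subr_ge0.
exfalso.
pose G := Gl `|` Gr.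
have G0 : G !=set0.
  have [At|At] := ltP (A t) 0.
    have [P|nP] := pselect ((phit t)%:E < rt t)%E.
      by have [y [Gy _]] := fromA t t0 At P; exists y; right.
    have ry : (rt t <= (phit t)%:E)%E by rewrite leNgt; apply/negP.
    exists t; right; split => //; exact: le_lt_trans (FR t t0 ry) At.
  have [Bt|Bt] := ltP (B t) 0; last by exfalso; apply: nok; split.
  have [P|nP] := pselect (lt t < (phit t)%:E)%E.
    by have [y [Gy _]] := fromB t t0 Bt P; exists y; left.
  have lx : ((phit t)%:E <= l t)%E by rewrite -ltl // leNgt; apply/negP.
  exists t; left; split => //; exact: le_lt_trans (FL t t0 lx) Bt.
have lbG : has_lbound G by exists 0 => x [[]|[]].
pose tau := inf G.
have tau0 : 0 <= tau by apply: lb_le_inf => // x [[]|[]].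
have both d : 0 < d -> (exists x, Gl x /\ tau < x < tau + d) /\
                      (exists y, Gr y /\ tau < y < tau + d).
  move=> d0; have [z Gz zlt] := inf_adherent d0 (conj G0 lbG).
  case: Gz => Gz.
  - have [y [Gy yz]] := stepl z Gz; have [x [Gx xy]] := stepr y Gy.
    have tx : tau <= x by apply: ge_inf => //; left.
    split; [exists z | exists y]; split => //; apply/andP; split => //.
    + exact: le_lt_trans tx (lt_trans xy yz).
    + exact: le_lt_trans tx xy.
    + exact: lt_trans yz zlt.
  - have [x [Gx xz]] := stepr z Gz; have [y [Gy yx]] := stepl x Gx.
    have ty : tau <= y by apply: ge_inf => //; right.
    split; [exists x | exists z]; split => //; apply/andP; split => //.
    + exact: le_lt_trans ty yx.
    + exact: lt_trans xz zlt.
    + exact: le_lt_trans ty (lt_trans yx xz).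
have [h|h] : (l tau < (phit tau)%:E)%E \/ ((phit tau)%:E < rt tau)%E.
  case: (ltP (l tau) (phit tau)%:E) => h; [by left | right].
  exact: le_lt_trans h (sep tau tau0).
- have := EV1 _ _ _ _ (cl tau tau0).1 (cphit tau tau0).1 h.
  move=> [d /= d0 Hd].
  have [[x [[x0 _ _ hx] /andP[tx xt]]] _] := both d d0.
  have := Hd x.
  have bx : ball_ (fun x => `|x|) tau d x.
    rewrite /ball_ /= ltr_norml; apply/andP; split; clear -tx xt d0; lra.
  move=> /(_ bx tx); rewrite ltNge hx //.
- have := EV2 _ _ _ _ (crt tau tau0).1 (cphit tau tau0).1 h.
  move=> [d /= d0 Hd].
  have [_ [y [[y0 _ _ hy] /andP[ty yt]]]] := both d d0.
  have := Hd y.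
  have bx : ball_ (fun x => `|x|) tau d y.
    rewrite /ball_ /= ltr_norml; apply/andP; split; clear -ty yt d0; lra.
  move=> /(_ bx ty); rewrite ltNge hy //.
Qed.
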